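(* Let $k\ge1$, let $\alpha=(\alpha_1,\dots,\alpha_k)$ and $\beta=(\beta_1,\dots,\beta_k)$ be $k$-tuples of nonnegative integers, and let $\sigma,\tau$ be permutations of $\{1,\dots,k\}$. Write $\sigma(\alpha)=(\alpha_{\sigma_1},\dots,\alpha_{\sigma_k})$ and $\tau(\beta)=(\beta_{\tau_1},\dots,\beta_{\tau_k})$. If $\tilde M_k(\sigma(\alpha),\tau(\beta))\ne0$, then $\alpha_{\sigma_1}=\cdots=\alpha_{\sigma_{k-|\alpha|}}=0$ and $\beta_{\tau_1}=\cdots=\beta_{\tau_{k-|\beta|}}=0$ (conditions that are vacuous when $|\alpha|\ge k$, resp. $|\beta|\ge k$).
   Context: $|\alpha|=\sum_i\alpha_i$. For $k$-tuples $a=(a_1,\dots,a_k)$, $b=(b_1,\dots,b_k)$ of nonnegative integers, $\tilde M_k(a,b)=(-1)^{\sum_i b_i}\det(m_{ij})_{1\le i,j\le 2k}$, where for $1\le i\le k$, $1\le j\le 2k$: $m_{ij}=\Gamma(2k-i-j+2-a_i)^{-1}$ and $m_{k+i,j}=(-1)^{i+j-1}\Gamma(2k-i-j+2-b_i)^{-1}$, with the convention $1/\Gamma(m)=0$ for $m\in\{0,-1,-2,\dots\}$. *)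

(* Defs.v *)
From mathcomp Require Import all_boot all_order all_algebra.
Set Implicit Arguments. Unset Strict Implicit. Unset Printing Implicit Defensive.
Import Order.TTheory GRing.Theory Num.Theory.
Local Open Scope ring_scope.

Definition invGamma (m : int) : rat :=
  if (0 < m)%R then ((absz m).-1)`!%:R^-1 else 0.

Definition tsum (k : nat) (a : 'I_k -> nat) : nat := (\sum_(i < k) a i)%N.

(* The 2k x 2k matrix (m_{ij}) of the paper, with 0-based indices:
   for 0 <= i < k, 0 <= j < 2k (paper indices i+1, j+1):
     row i     : 1/Gamma(2k - i - j - a_i)
     row k + i : (-1)^(i+j+1) / Gamma(2k - i - j - b_i). *)
Definition Mmat (k : nat) (a b : 'I_k -> nat) : 'M[rat]_(k + k) :=
  \matrix_(r < k + k, c < k + k)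
    match split r with
    | inl i => invGamma ((k + k)%:Z - (i : nat)%:Z - (c : nat)%:Z - (a i)%:Z)
    | inr i => (-1) ^+ ((i : nat) + (c : nat) + 1)
               * invGamma ((k + k)%:Z - (i : nat)%:Z - (c : nat)%:Z - (b i)%:Z)
    end.

Definition Mtilde (k : nat) (a b : 'I_k -> nat) : rat :=
  (-1) ^+ (tsum b) * \det (Mmat a b).

(* Main.v *)
Require Import Defs.
From mathcomp Require Import all_boot all_order all_algebra all_fingroup.
Local Open Scope ring_scope.
Import GRing.Theory.
From mathcomp Require Import zify.

Lemma det_prop_rows (n : nat) (A : 'M[rat]_n) (i1 i2 : 'I_n) (c : rat) :
  i1 != i2 -> (forall j, A i1 j = c * A i2 j) -> \det A = 0.
Proof.
move=> ne hA.
pose B := \matrix_(r, j) if r == i1 then A i2 j else A r j.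
have -> : \det A = c * \det B + 0 * \det A.
  apply: (@determinant_multilinear _ _ A B A i1 c 0).
  - by rewrite scale0r addr0; apply/rowP => j; rewrite !mxE eqxx hA.
  - apply/matrixP => r j; rewrite !mxE; case: eqP => // h.
    by move: (neq_lift i1 r); rewrite h eqxx.
  - by [].
rewrite mul0r addr0 (@determinant_alternate _ _ B i1 i2) ?mulr0 //.
by move=> j; rewrite !mxE eqxx; case: ifP.
Qed.

Lemma chain (k : nat) (g : nat -> nat) :
  (forall i j, (i < k)%N -> (j < k)%N -> i <> j -> (i + g i)%N <> (j + g j)%N) ->
  forall n i, (k - i <= n)%N -> (i < k)%N -> (0 < g i)%N ->
  (k - i <= \sum_(i <= j < k) g j)%N.
Proof.
move=> inj; elim=> [|n IH] i hn hi gi.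
  exfalso; lia.
have hsplit : forall m, (i < m)%N -> (m <= k)%N ->
   (g i + \sum_(m <= j < k) g j <= \sum_(i <= j < k) g j)%N.
  move=> m him hmk.
  rewrite (big_cat_nat (ltnW him) hmk) /=.
  by rewrite (big_ltn him) /= -addnA leq_add2l leq_addl.
set m := (i + g i)%N.
case: (ltnP m k) => hm.
  have gm : (0 < g m)%N.
    rewrite lt0n; apply/eqP => g0; apply: (inj i m) => //.
      by rewrite /m => e; move: gi; lia.
    by rewrite g0 addn0.
  have him : (i < m)%N by rewrite /m; lia.
  have hkm : (k - m <= n)%N by move: hn; rewrite /m; lia.
  have := IH m hkm hm gm; have := hsplit m him (ltnW hm).
  move: (\sum_(i <= j < k) g j) (\sum_(m <= j < k) g j) => s1 s2.
  rewrite /m; lia.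
have := hsplit k hi (leqnn k); rewrite big_geq //.
move: (\sum_(i <= j < k) g j) => s1; rewrite /m in hm; lia.
Qed.

Lemma zero_prefix (k : nat) (f : 'I_k.+1 -> nat) :
  (forall i j : 'I_k.+1, i != j -> (i + f i)%N != (j + f j)%N) ->
  forall i : 'I_k.+1, (i < k.+1 - tsum f)%N -> f i = 0%N.
Proof.
move=> hf i hi.
pose g j := if (j < k.+1)%N then f (inord j) else 0%N.
have ht : tsum f = (\sum_(0 <= j < k.+1) g j)%N.
  rewrite /tsum big_mkord; apply: eq_bigr => j _.
  by rewrite /g ltn_ord inord_val.
have hle : (\sum_(i <= j < k.+1) g j <= \sum_(0 <= j < k.+1) g j)%N.
  by rewrite (big_cat_nat (leq0n i) (ltnW (ltn_ord i))) /= leq_addl.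
case: (posnP (f i)) => [//|fi]; exfalso.
have gi : (0 < g i)%N by rewrite /g ltn_ord inord_val.
have inj : forall x y, (x < k.+1)%N -> (y < k.+1)%N -> x <> y ->
    (x + g x)%N <> (y + g y)%N.
  move=> x y hx hy nxy e.
  rewrite /g hx hy in e.
  have hne : (inord x != inord y :> 'I_k.+1).
    by apply/negP => /eqP/(congr1 val) /=; rewrite !inordK.
  move/eqP: (hf _ _ hne); apply.
  rewrite !inordK //.
have := @chain _ _ inj _ i (leqnn _) (ltn_ord i) gi.
move: hle hi; rewrite -ht.
move: (\sum_(i <= j < k.+1) g j)%N (tsum f) => s1 s2; lia.
Qed.

Lemma split_l (k : nat) (i : 'I_k) : split (lshift k i) = inl i.
Proof. exact: (unsplitK (inl _ i)). Qed.
Lemma split_r (k : nat) (i : 'I_k) : split (rshift k i) = inr i.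
Proof. exact: (unsplitK (inr _ i)). Qed.

Lemma rows_a (k : nat) (a b : 'I_k -> nat) : \det (Mmat a b) != 0 ->
  forall i j : 'I_k, i != j -> (i + a i)%N != (j + a j)%N.
Proof.
move=> hd i j nij; apply/negP => /eqP e; move/eqP: hd; apply.
apply: (@det_prop_rows _ _ (lshift k i) (lshift k j) 1).
  by rewrite eq_lshift.
move=> c; rewrite /Mmat !mxE !split_l mul1r; congr invGamma.
have : ((i : nat) + a i)%:Z = ((j : nat) + a j)%:Z by rewrite e.
lia.
Qed.

Lemma rows_b (k : nat) (a b : 'I_k -> nat) : \det (Mmat a b) != 0 ->
  forall i j : 'I_k, i != j -> (i + b i)%N != (j + b j)%N.
Proof.
move=> hd i j nij; apply/negP => /eqP e; move/eqP: hd; apply.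
apply: (@det_prop_rows _ _ (rshift k i) (rshift k j) ((-1) ^+ (i + j))).
  by rewrite eq_rshift.
move=> c; rewrite /Mmat !mxE !split_r mulrA -exprD.
have -> : invGamma ((k + k)%:Z - (i : nat)%:Z - (c : nat)%:Z - (b i)%:Z)
  = invGamma ((k + k)%:Z - (j : nat)%:Z - (c : nat)%:Z - (b j)%:Z).
  congr invGamma.
  have : ((i : nat) + b i)%:Z = ((j : nat) + b j)%:Z by rewrite e.
  lia.
congr (_ * _); rewrite -signr_odd -[in RHS]signr_odd; congr (_ ^+ _).
rewrite !oddD; by case: (odd i); case: (odd j); case: (odd c).
Qed.

Theorem lemma5 (k : nat) (hk : (1 <= k)%N) (alpha beta : 'I_k -> nat)
    (sigma tau : 'S_k) :
  Mtilde (fun i => alpha (sigma i)) (fun i => beta (tau i)) != 0 ->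
  (forall i : 'I_k, (i < k - tsum alpha)%N -> alpha (sigma i) = 0%N) /\
  (forall i : 'I_k, (i < k - tsum beta)%N -> beta (tau i) = 0%N).
Proof.
case: k hk alpha beta sigma tau => [//|k] _ alpha beta sigma tau hM.
have hd : \det (Mmat (fun i => alpha (sigma i)) (fun i => beta (tau i))) != 0.
  by move: hM; rewrite /Mtilde; apply: contra => /eqP ->; rewrite mulr0.
have ta : tsum alpha = tsum (fun i => alpha (sigma i)).
  by rewrite /tsum (reindex_inj (@perm_inj _ sigma)).
have tb : tsum beta = tsum (fun i => beta (tau i)).
  by rewrite /tsum (reindex_inj (@perm_inj _ tau)).
split.
  rewrite ta => i; exact: (@zero_prefix _ (fun i => alpha (sigma i)) (@rows_a _ _ _ hd) i).
rewrite tb => i; exact: (@zero_prefix _ (fun i => beta (tau i)) (@rows_b _ _ _ hd) i).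
Qed.
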